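(* Let $G=(L\cup R,E)$ be a left-regular Tanner graph (without parallel edges) with left degree $d_l\ge 3$ and girth $g>4$. Let $\mathcal{S}\subset L$ be an $(a,b)$ trapping set with $b<a$ and $G(\mathcal{S})$ connected. Consider three cases: (E) $\mathcal{S}$ is elementary and $d_l(d_l-1)>b$; (O) $\mathcal{S}$ has a check node in $\Gamma_{\mathrm{o}}(\mathcal{S})$ of degree $d_o>1$ in $G(\mathcal{S})$, and $d_o(d_l-1)>b$; (Ev) $\mathcal{S}$ has a check node in $\Gamma_{\mathrm{e}}(\mathcal{S})$ of degree $d_e>2$ in $G(\mathcal{S})$, and $d_e(d_l-1)>b$. (Empty sums are $0$.) (a) If $g=4k$ for an integer $k>1$, then in case (E) \[a\ge 1+d_l+(d_l(d_l-1)-b)\sum_{i=0}^{k-3}(d_l-1)^i+\frac{(d_l(d_l-1)-b)(d_l-1)^{k-2}}{d_l};\] in case (O) $a\ge d_o+(d_o(d_l-1)-b+1)\sum_{i=0}^{k-2}(d_l-1)^i$; and in case (Ev) $a\ge d_e+(d_e(d_l-1)-b)\sum_{i=0}^{k-2}(d_l-1)^i$. (b) If $g=4k+2$ for a positive integer $k$, then in case (E) $a\ge 1+d_l+(d_l(d_l-1)-b)\sum_{i=0}^{k-2}(d_l-1)^i$; in case (O) \[a\ge d_o+(d_o(d_l-1)-b+1)\sum_{i=0}^{k-2}(d_l-1)^i+\frac{(d_o(d_l-1)-b+1)(d_l-1)^{k-1}}{d_l};\] and in case (Ev) \[a\ge d_e+(d_e(d_l-1)-b)\sum_{i=0}^{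k-2}(d_l-1)^i+\frac{(d_e(d_l-1)-b)(d_l-1)^{k-1}}{d_l}.\]
   Context: A Tanner graph is a bipartite graph $G=(L\cup R,E)$ with variable nodes $L$ and check nodes $R$; left-regular with left degree $d_l$ means every variable node has degree $d_l$; the girth is the length of a shortest cycle. For $\mathcal{S}\subset L$, $\Gamma(\mathcal{S})$ is the set of neighbors of $\mathcal{S}$ in $R$, and $G(\mathcal{S})$ is the induced subgraph on $\mathcal{S}\cup\Gamma(\mathcal{S})$. $\Gamma_{\mathrm{o}}(\mathcal{S})$ and $\Gamma_{\mathrm{e}}(\mathcal{S})$ are the check nodes of $\Gamma(\mathcal{S})$ with odd, respectively even, degree in $G(\mathcal{S})$. $\mathcal{S}$ is an $(a,b)$ trapping set if $|\mathcal{S}|=a$ and $|\Gamma_{\mathrm{o}}(\mathcal{S})|=b$; it is elementary if every check node of $G(\mathcal{S})$ has degree one or two in $G(\mathcal{S})$. *)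

(* Defs.v *)
From mathcomp Require Import all_boot all_order all_algebra.
Set Implicit Arguments. Unset Strict Implicit. Unset Printing Implicit Defensive.
Import Order.TTheory GRing.Theory Num.Theory.

(* A Tanner graph: variable nodes L, check nodes R (finite types), and a
   boolean adjacency adj v c (so there are no parallel edges). *)
Section Tanner.
Variables (L R : finType) (adj : L -> R -> bool).

Definition tedge : rel (L + R)%type := fun x y =>
  match x, y with
  | inl v, inr c => adj v c
  | inr c, inl v => adj v c
  | _, _ => false
  end.

Definition left_regular (dl : nat) : Prop :=
  forall v : L, #|[set c | adj v c]| = dl.

Definition is_cycle (p : seq (L + R)%type) : Prop := ucycle tedge p /\ 2 < size p.

Definition girth (g : nat) : Prop :=
  (exists p, is_cycle p /\ size p = g) /\ (forall p, is_cycle p -> g <= size p).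

Definition Gam (S : {set L}) : {set R} := [set c | [exists v in S, adj v c]].

Definition degS (S : {set L}) (c : R) : nat := #|[set v in S | adj v c]|.

Definition Gam_o (S : {set L}) : {set R} := [set c in Gam S | odd (degS S c)].
Definition Gam_e (S : {set L}) : {set R} := [set c in Gam S | ~~ odd (degS S c)].

Definition trapping_set (S : {set L}) (a b : nat) : Prop :=
  #|S| = a /\ #|Gam_o S| = b.

Definition elementary (S : {set L}) : Prop :=
  forall c, c \in Gam S -> (degS S c == 1) || (degS S c == 2).

Definition VS (S : {set L}) : {set (L + R)%type} :=
  [set x | match x with inl v => v \in S | inr c => c \in Gam S end].

Definition induced_connected (S : {set L}) : Prop :=
  forall x y, x \in VS S -> y \in VS S ->
    connect [rel u w | [&& tedge u w, u \in VS S & w \in VS S]] x y.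

End Tanner.

(* Main.v *)
Require Import Defs.
From mathcomp Require Import all_boot all_order all_algebra.
From mathcomp Require Import zify ring lra.
Import Order.TTheory GRing.Theory Num.Theory.
Set Implicit Arguments. Unset Strict Implicit. Unset Printing Implicit Defensive.

Section Walks.
Variables (L R : finType) (adj : L -> R -> bool).
Local Notation T := (L + R)%type.
Local Notation te := (tedge adj).

Lemma te_sym x y : te x y = te y x. Proof. by case: x; case: y. Qed.
Lemma te_irr x : te x x = false. Proof. by case: x. Qed.

Definition adjw (d : T) (s : seq T) := forall i, i.+1 < size s -> te (nth d s i) (nth d s i.+1).
Definition nbw (d : T) (s : seq T) := forall i, i.+2 < size s -> nth d s i != nth d s i.+2.

Lemma cycle_of_walk d s : adjw d s -> nbw d s -> ~~ uniq s ->
  exists p, is_cycle adj p /\ size p < size s.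
Proof.
elim: s => [|x s IH] //= Ha Hn.
have Ha' : adjw d s by move=> i Hi; exact: (Ha i.+1).
have Hn' : nbw d s by move=> i Hi; exact: (Hn i.+1).
case Us: (uniq s); last first.
  by move=> _; have [p [Hp Hs]] := IH Ha' Hn' (negbT Us); exists p; split=> //; lia.
rewrite andbT negbK => xs.
set i := index x s.
have Hi : i < size s by rewrite index_mem.
have Hx : nth d s i = x by exact: nth_index.
have Hi2 : 1 < i.
  case: i Hi Hx => [|[|i]] // Hi Hx.
  - by move: (Ha 0 Hi); rewrite /= Hx te_irr.
  - by move: (Hn 0 Hi); rewrite /= Hx eqxx.
exists (x :: take i s); split; last by rewrite /= size_take Hi; lia.
split; last by rewrite /= size_take Hi; lia.
rewrite /ucycle /= -Hx -take_nth // Hx take_uniq // andbT in_take // ltnn andbT.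
apply: take_path; apply/(pathP d) => j Hj.
exact: (Ha j).
Qed.

Variables (S : {set L}) (r : T).

Definition ok (w : seq T) (y : T) : bool :=
  [&& te (head r w) y, y \in VS adj S & (if w is _ :: z :: _ then y != z else true)].

Fixpoint W n : seq (seq T) :=
  if n is n'.+1 then [seq y :: w | w <- W n', y <- filter (ok w) (enum {: T})]
  else [:: [:: r]].

Lemma W_S n (w : seq T) : w \in W n.+1 <-> exists u y, [/\ u \in W n, ok u y & w = y :: u].
Proof.
split.
  by case/allpairsPdep=> u [y [Hu]]; rewrite mem_filter => /andP[Hy _] ->; exists u, y.
case=> u [y [Hu Hy ->]]; apply/allpairsPdep; exists u, y; split=> //.
by rewrite mem_filter Hy mem_enum.
Qed.

Lemma W_prop n (w : seq T) : w \in W n -> [/\ size w = n.+1, nth r w n = r, adjw r w & nbw r w].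
Proof.
elim: n w => [|n IH] w.
  by rewrite mem_seq1 => /eqP ->; split=> // i /=; lia.
case/W_S=> u [y [Hu /and3P[H1 H2 H3] ->]].
have [Hs Hl Ha Hn] := IH u Hu.
split; first by rewrite /= Hs.
- by [].
- case=> [|i] Hi /=; last by apply: Ha.
  by rewrite te_sym (nth0 r u) in H1 *; case: u {Hu Hs Hl Ha Hn H3} H1 Hi.
- case=> [|i] Hi /=; last by apply: Hn.
  by move: Hi H3; case: u {Hu Hs Hl Ha Hn H1} => [|z [|z' u']] //=.
Qed.

Lemma W_head n (w : seq T) : r \in VS adj S -> w \in W n -> head r w \in VS adj S.
Proof.
case: n => [|n] Hr; first by rewrite mem_seq1 => /eqP ->.
by case/W_S=> u [y [_ /and3P[_ H _] ->]].
Qed.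

Lemma W_uniq n : uniq (W n).
Proof.
elim: n => [|n IH] //=.
apply: allpairs_uniq_dep => //.
  by move=> u _; rewrite filter_uniq // enum_uniq.
by move=> [u1 y1] [u2 y2] _ _ /= [-> ->].
Qed.


Variable g : nat.
Hypothesis Hg : forall p, is_cycle adj p -> g <= size p.

Lemma W_uniqw n (w : seq T) : w \in W n -> n < g -> uniq w.
Proof.
move=> Hw Hn; have [Hs _ Ha Hb] := W_prop Hw.
apply/negPn/negP => /(cycle_of_walk Ha Hb) [p [/Hg Hp Hsp]]; lia.
Qed.

Lemma W_root n (w : seq T) : w \in W n -> n < g -> head r w = r -> n = 0.
Proof.
move=> Hw Hn Hh; have [Hs Hl _ _] := W_prop Hw.
have U := W_uniqw Hw Hn.
have H0 : 0 < size w by lia.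
have H1 : n < size w by lia.
have := nth_uniq r H0 H1 U.
by rewrite nth0 Hh Hl eqxx => /esym/eqP.
Qed.

Lemma nth_revcat (w' u : seq T) i :
  nth r (rev w' ++ u) i =
  if i < size w' then nth r w' (size w' - i.+1) else nth r u (i - size w').
Proof. by rewrite nth_cat size_rev; case: ifP => // H; rewrite nth_rev. Qed.

Lemma W_inj m m' (w w' : seq T) : w \in W m -> w' \in W m' -> head r w = head r w' ->
  m + m' < g -> w = w'.
Proof.
elim: m m' w w' => [|m IH] m' w w' Hw Hw' Hh Hmm.
  have Hw0 : w = [:: r] by move: Hw; rewrite mem_seq1 => /eqP.
  have Hm' : m' = 0 by apply: (W_root Hw' _ _) => //; rewrite -Hh Hw0.
  by move: Hw'; rewrite Hm' mem_seq1 Hw0 => /eqP.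
case: m' Hw' Hh Hmm => [|m'] Hw' Hh Hmm.
  have Hw0 : w' = [:: r] by move: Hw'; rewrite mem_seq1 => /eqP.
  have Hmg : m.+1 < g by lia.
  by have := W_root Hw Hmg; rewrite Hh Hw0 => /(_ erefl).
move: Hw Hw' Hh => /W_S [u [y [Hu Hy ->]]] /W_S [u' [y' [Hu' Hy' ->]]] /= Hyy.
case Huu: (head r u == head r u').
  by rewrite Hyy (IH m' u u') //; [apply/eqP | lia].
exfalso.
have [Hs Hl Ha Hn] := W_prop Hu.
have [Hs' Hl' Ha' Hn'] := W_prop Hu'.
have [_ _ Haw Hnw] := W_prop (proj2 (W_S _ _) (ex_intro _ u (ex_intro _ y (And3 Hu Hy erefl)))).
have [_ _ _ Hnw'] := W_prop (proj2 (W_S _ _) (ex_intro _ u' (ex_intro _ y' (And3 Hu' Hy' erefl)))).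
set s := rev (y' :: u') ++ u.
have Hss : size s = m.+1 + m'.+2 by rewrite size_cat size_rev /= Hs Hs'; lia.
suff [p [/Hg Hp Hsp]] : exists p, is_cycle adj p /\ size p < size s by lia.
apply: (cycle_of_walk (d := r)).
- move=> i Hi; rewrite /s !nth_revcat /= Hs'.
  case: (ltnP i.+1 m'.+2) => H1.
    rewrite ifT; last lia.
    have -> : m'.+2 - i.+1 = (m'.+2 - i.+2).+1 by lia.
    rewrite te_sym; case Hk: (m'.+2 - i.+2) => [|k] /=.
      by move: Hy' => /and3P[H _ _]; rewrite nth0 te_sym.
    apply: Ha'; lia.
  case: (ltnP i m'.+2) => H2.
    have -> : i = m'.+1 by lia.
    rewrite subnn.
    by rewrite -Hyy; apply: (Haw 0); rewrite /= Hs.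
  have -> : i.+1 - m'.+2 = (i - m'.+2).+1 by lia.
  apply: Ha; lia.
- move=> i Hi; rewrite /s !nth_revcat /= Hs'.
  case: (ltnP i.+2 m'.+2) => H1.
    rewrite ifT; last lia.
    have -> : m'.+2 - i.+1 = (m'.+2 - i.+3).+2 by lia.
    rewrite eq_sym; case Hk: (m'.+2 - i.+3) => [|k] /=.
      by apply: (Hnw' 0); rewrite /= Hs'; lia.
    apply: Hn'; lia.
  case: (ltnP i m'.+2) => H2.
    case: (ltnP i.+1 m'.+2) => H3.
      have -> : i = m' by lia.
      rewrite subSS subnn subSn // subnn /=.
      by rewrite !nth0 eq_sym Huu.
    have -> : i = m'.+1 by lia.
    rewrite subnn (_ : m'.+3 - m'.+2 = 1); last lia.
    by rewrite -Hyy; apply: (Hnw 0); rewrite /= Hs; lia.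
  have -> : i.+2 - m'.+2 = (i - m'.+2).+2 by lia.
  apply: Hn; lia.
- rewrite cat_uniq; apply/negP => /and3P[_ /negP H _]; apply: H.
  apply/hasP; exists r; first by rewrite -Hl mem_nth // Hs.
  by rewrite mem_rev -Hl' inE mem_nth ?orbT // Hs'.
Qed.

Definition isL (x : T) := if x is inl _ then true else false.
Definition isLS (x : T) := if x is inl v then v \in S else false.
Definition leafp (x : T) := if x is inr c then degS adj S c == 1 else false.
Definition Gop (x : T) := if x is inr c then c \in Gam_o adj S else false.

Lemma te_isL x y : te x y -> isL y = ~~ isL x. Proof. by case: x; case: y. Qed.

Lemma W_par n (w : seq T) : w \in W n -> isL (head r w) = isL r (+) odd n.
Proof.
elim: n w => [|n IH] w; first by rewrite mem_seq1 => /eqP -> /=; rewrite addbF.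
case/W_S=> u [y [Hu /and3P[H1 _ _] ->]] /=.
by rewrite (te_isL H1) IH // addbN.
Qed.

Lemma W_LS n (w : seq T) : r \in VS adj S -> w \in W n -> isL (head r w) ->
  isLS (head r w).
Proof.
move=> Hr Hw; move: (W_head Hr Hw); rewrite /VS inE.
by case: (head r w).
Qed.

Definition nbrs h := [set y : T | te h y && (y \in VS adj S)].

Lemma mem_filt (w : seq T) y : (y \in filter (ok w) (enum {: T})) = ok w y.
Proof. by rewrite mem_filter mem_enum andbT. Qed.

Definition sec (w : seq T) := if w is _ :: z :: _ then z else r.

Lemma branch (w : seq T) : #|nbrs (head r w)| <= size (filter (ok w) (enum {: T})) + 1.
Proof.
have U : uniq (filter (ok w) (enum {: T})) by rewrite filter_uniq // enum_uniq.
rewrite -(card_uniqP U) (cardD1 (sec w)) addnC leq_add //; last by case: (sec w \in nbrs (head r w)).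
apply: subset_leq_card; apply/subsetP => y; rewrite !inE mem_filt /ok.
case/andP=> Hyz /andP[Ht Hv]; rewrite Ht /VS inE Hv /=.
by clear U Ht; case: w Hyz => [|z [|z' w']].
Qed.

Lemma branch0 : #|nbrs r| <= size (filter (ok [:: r]) (enum {: T})).
Proof.
have U : uniq (filter (ok [:: r]) (enum {: T})) by rewrite filter_uniq // enum_uniq.
rewrite -(card_uniqP U); apply: subset_leq_card; apply/subsetP => y.
by rewrite !inE mem_filt /ok /= andbT /VS inE.
Qed.

Lemma card_teL dl v : left_regular adj dl -> #|[set y | te (inl v) y]| = dl.
Proof.
move=> Hreg; rewrite -(Hreg v).
rewrite (_ : [set y | te (inl v) y] = inr @: [set c | adj v c]).
  by apply: card_imset => x y [].
apply/setP => -[u|c]; rewrite inE /=.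
  by apply/esym/imsetP => -[].
by rewrite mem_imset ?inE // => x y [].
Qed.

Lemma card_nbrsL dl v : left_regular adj dl -> v \in S -> #|nbrs (inl v)| = dl.
Proof.
move=> Hreg Hv; rewrite -(card_teL v Hreg); apply: eq_card => -[u|c]; rewrite !inE //=.
case Hc: (adj v c) => //= =>/=.
by apply/existsP; exists v; rewrite Hv Hc.
Qed.

Lemma card_nbrsR c : #|nbrs (inr c)| = degS adj S c.
Proof.
rewrite /degS (_ : nbrs (inr c) = inl @: [set v in S | adj v c]).
  by apply: card_imset => x y [].
apply/setP => -[u|d]; rewrite !inE /=.
  rewrite mem_imset ?inE; last by move=> x y [].
  by rewrite andbC.
by apply/esym/imsetP => -[].
Qed.

Definition N n := size (W n).
Definition ell n := count (fun w => leafp (head r w)) (W n).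

Lemma N_rec n : N n.+1 = sumn [seq size (filter (ok w) (enum {: T})) | w <- W n].
Proof. by rewrite /N /= size_allpairs_dep. Qed.

Lemma sumn_var (X : eqType) (s : seq X) f c :
  (forall x, x \in s -> c <= f x + 1) -> c * size s <= sumn (map f s) + size s.
Proof.
elim: s => [|x s IH] H //=; first by rewrite muln0.
have := H x (mem_head _ _); have := IH (fun y Hy => H y (@mem_behead _ (x :: s) _ Hy)); lia.
Qed.

Lemma sumn_chk (X : eqType) (s : seq X) f (P : pred X) :
  (forall x, x \in s -> 1 <= f x + P x) -> size s <= sumn (map f s) + count P s.
Proof.
elim: s => [|x s IH] H //=.
have := H x (mem_head _ _); have := IH (fun y Hy => H y (@mem_behead _ (x :: s) _ Hy)); lia.
Qed.

Lemma N_var dl n : left_regular adj dl -> r \in VS adj S -> isL r (+) odd n ->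
  dl * N n <= N n.+1 + N n.
Proof.
move=> Hreg Hr Hp; rewrite N_rec; apply: sumn_var => w Hw.
have HL : isL (head r w) by rewrite (W_par Hw).
have := W_LS Hr Hw HL; have := branch w.
by case: (head r w) => // v Hb Hv; rewrite (card_nbrsL Hreg Hv) in Hb.
Qed.

Lemma N_chk n : r \in VS adj S -> ~~ (isL r (+) odd n) -> N n <= N n.+1 + ell n.
Proof.
move=> Hr Hp; rewrite N_rec /ell; apply: sumn_chk => w Hw.
have HL : ~~ isL (head r w) by rewrite (W_par Hw).
have := W_head Hr Hw; have := branch w.
case: (head r w) HL => // c _ Hb; rewrite card_nbrsR /= in Hb.
rewrite /VS inE /Gam inE => /existsP [u /andP[Hu Hc]].
have : 0 < degS adj S c.
  by apply/card_gt0P; exists u; rewrite inE Hu.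
rewrite /leafp; move: Hb; case: (degS adj S c) => [|[|k]] //=; lia.
Qed.


Definition H (ns : seq nat) := flatten [seq map (head r) (W n) | n <- ns].
Definition pw (ns : seq nat) := forall m m', m \in ns -> m' \in ns -> m + m' < g.

Lemma mem_H ns x : x \in H ns -> exists n (w : seq T), [/\ n \in ns, w \in W n & x = head r w].
Proof.
case/flattenP => s /mapP [n Hn ->] /mapP [w Hw ->]; by exists n, w.
Qed.

Lemma W_size n (w : seq T) : w \in W n -> size w = n.+1.
Proof. by case/W_prop. Qed.

Lemma H_uniq ns : uniq ns -> pw ns -> uniq (H ns).
Proof.
elim: ns => //= n ns IH /andP[Hn Uns] Hpw.
rewrite cat_uniq; apply/and3P; split.
- rewrite map_inj_in_uniq ?W_uniq // => w w' Hw Hw' Hh.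
  by apply: (W_inj Hw Hw' Hh); apply: Hpw; rewrite mem_head.
- apply/hasPn => x /mem_H [m [w [Hm Hw ->]]]; apply/mapP => -[w' Hw' Heq].
  have E : w' = w.
    by apply: (W_inj Hw' Hw (esym Heq)); apply: Hpw; rewrite ?mem_head ?inE ?Hm ?orbT.
  have := W_size Hw; rewrite -E (W_size Hw') => -[Enm].
  by move: Hn; rewrite Enm Hm.
- apply: IH => // m m' Hm Hm'; apply: Hpw; rewrite inE ?Hm ?Hm' ?orbT //.
Qed.

Lemma size_H ns : size (H ns) = sumn [seq N n | n <- ns].
Proof. by elim: ns => //= n ns IH; rewrite size_cat size_map IH. Qed.

Lemma count_H ns (P : pred T) :
  count P (H ns) = sumn [seq count (fun w => P (head r w)) (W n) | n <- ns].
Proof. by elim: ns => //= n ns IH; rewrite count_cat count_map IH. Qed.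

Lemma uniq_le (X : finType) (s : seq X) (A : {pred X}) : uniq s -> {subset s <= A} -> size s <= #|A|.
Proof. by move=> U Hs; rewrite -(card_uniqP U); apply: subset_leq_card; apply/subsetP. Qed.

Lemma card_LS : #|[set x | isLS x]| = #|S|.
Proof.
rewrite (_ : [set x | isLS x] = inl @: S); first by apply: card_imset => x y [].
apply/setP => -[u|c]; rewrite inE /=; first by rewrite mem_imset // => x y [].
by apply/esym/imsetP => -[].
Qed.

Lemma sum_P ns (P : pred T) : uniq ns -> pw ns ->
  sumn [seq count (fun w => P (head r w)) (W n) | n <- ns] <= #|[set x | P x]|.
Proof.
move=> U Hpw; rewrite -count_H -size_filter; apply: uniq_le.
  by rewrite filter_uniq // H_uniq.
by move=> x; rewrite mem_filter inE => /andP[].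
Qed.

Lemma sum_S ns : uniq ns -> pw ns ->
  (forall n w, n \in ns -> w \in W n -> isLS (head r w)) ->
  sumn [seq N n | n <- ns] <= #|S|.
Proof.
move=> U Hpw HS; rewrite -size_H -card_LS; apply: uniq_le; first exact: H_uniq.
by move=> x /mem_H [n [w [Hn Hw ->]]]; rewrite inE; apply: HS Hn Hw.
Qed.

Lemma sum_S_last dl ns l : left_regular adj dl -> uniq ns -> pw ns -> l \notin ns ->
  (forall m, m \in ns -> l + m < g) -> l.-1 + l.-1 < g -> 0 < l ->
  (forall n w, n \in ns -> w \in W n -> isLS (head r w)) ->
  (forall w, w \in W l -> isLS (head r w)) ->
  N l + dl * sumn [seq N n | n <- ns] <= dl * #|S|.
Proof.
move=> Hreg U Hpw Hl Hlm Hll Hl0 HS HSl.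
set A := [set x | isLS x && (x \notin H ns)].
set Q := [set p : T * T | (p.1 \in A) && te p.1 p.2].
have HQ : #|Q| = #|A| * dl.
  rewrite -sum1_card (eq_bigl (fun p : T * T => (p.1 \in A) && te p.1 p.2)); last first.
    by move=> p; rewrite inE.
  rewrite -(pair_big_dep (fun x => x \in A) (fun x y => te x y) (fun _ _ => 1)) /=.
  rewrite -sum_nat_const; apply: eq_bigr => x; rewrite inE => /andP[Hx _].
  rewrite sum1dep_card; case: x Hx => // v _; exact: card_teL.
have HA : #|A| + sumn [seq N n | n <- ns] <= #|S|.
  rewrite -size_H -(card_uniqP (H_uniq U Hpw)) -cardUI.
  have -> : #|[predI A & H ns]| = 0.
    apply: eq_card0 => x.
    by rewrite !inE; case: (x \in H ns); rewrite ?andbF.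
  rewrite addn0 -card_LS; apply: subset_leq_card; apply/subsetP => x.
  rewrite !inE; case/orP; first by case/andP.
  by case/mem_H => [n [w [Hn Hw ->]]]; apply: HS Hn Hw.
have HN : N l <= #|Q|.
  case: l Hl Hlm Hll Hl0 HSl => // l Hl Hlm Hll _ HSl.
  rewrite /N -(size_map (fun w => (head r w, sec w))); apply: uniq_le.
    rewrite map_inj_in_uniq ?W_uniq // => w w' /W_S [u [y [Hu Hy ->]]].
    move=> /W_S [u' [y' [Hu' Hy' ->]]] /= [-> Hs].
    have Eu : head r u = head r u'.
      by move: Hs (W_size Hu) (W_size Hu'); case: u {Hu Hy}; case: u' {Hu' Hy'}.
    by rewrite (W_inj Hu Hu' Eu).
  move=> p /mapP [w Hw ->]; rewrite inE /= inE HSl //=.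
  apply/andP; split.
    apply/negP => /mem_H [n [w' [Hn Hw' Heq]]].
    have E : w = w' by apply: (W_inj Hw Hw' Heq); apply: Hlm.
    have := W_size Hw; rewrite E (W_size Hw') => -[En].
    by move: Hl; rewrite -En Hn.
  have [Hs _ Ha _] := W_prop Hw.
  have := Ha 0; rewrite Hs /= => /(_ isT).
  by case: w Hw Hs {Ha} => [|x [|z w]].
nia.
Qed.


Lemma sumn_iota (f : nat -> nat) k : sumn [seq f j | j <- iota 0 k] = \sum_(j < k) f j.
Proof. by rewrite sumnE big_map -(big_mkord xpredT) /index_iota subn0. Qed.

Lemma pw_lev a k : 4 * k + 2 * a < g + 4 -> pw [seq 2 * j + a | j <- iota 0 k].
Proof. by move=> H m m' /mapP[j Hj ->] /mapP[j' Hj' ->]; move: Hj Hj'; rewrite !mem_iota; lia. Qed.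

Lemma uniq_lev a k : uniq [seq 2 * j + a | j <- iota 0 k].
Proof. by rewrite map_inj_uniq ?iota_uniq // => x y; lia. Qed.

Lemma LS_lev n (w : seq T) : r \in VS adj S -> w \in W n -> isL r (+) odd n -> isLS (head r w).
Proof. by move=> Hr Hw Hp; have := W_par Hw; rewrite Hp => H; apply: (W_LS Hr Hw); rewrite H. Qed.

Lemma leaf_Gop x : leafp x -> Gop x.
Proof.
case: x => //= c /eqP H1; rewrite /Gam_o inE H1 andbT /Gam inE.
have : 0 < degS adj S c by rewrite H1.
by case/card_gt0P => u; rewrite inE => /andP[Hu Hc]; apply/existsP; exists u; rewrite Hu.
Qed.

Lemma card_Gop : #|[set x | Gop x]| = #|Gam_o adj S|.
Proof.
rewrite (_ : [set x | Gop x] = inr @: Gam_o adj S); first by apply: card_imset => x y [].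
apply/setP => -[u|c]; rewrite inE /=; last by rewrite mem_imset // => x y [].
by apply/esym/imsetP => -[].
Qed.

Lemma N0 : N 0 = 1. Proof. by []. Qed.

Lemma N1 : #|nbrs r| <= N 1.
Proof. by rewrite N_rec /= addn0; apply: branch0. Qed.

Section CheckRoot.
Variables (dl : nat) (c : R).
Hypotheses (Hreg : left_regular adj dl) (Hrc : r = inr c) (Hc : c \in Gam adj S).

Lemma HrV : r \in VS adj S. Proof. by rewrite Hrc /VS inE. Qed.

Lemma C1 : degS adj S c <= N 1.
Proof. by rewrite -card_nbrsR -Hrc N1. Qed.

Lemma C2 j : (dl - 1) * N (2 * j + 1) <= N (2 * j.+1 + 1) + ell (2 * j + 2).
Proof.
have H1 := N_var (n := 2 * j + 1) Hreg HrV.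
have H2 := N_chk (n := (2 * j + 1).+1) HrV.
rewrite Hrc /= oddD oddM /= in H1 H2.
have := H1 isT; have := H2 isT.
have -> : 2 * j.+1 + 1 = (2 * j + 1).+2 by lia.
have -> : 2 * j + 2 = (2 * j + 1).+1 by lia.
rewrite mulnBl mul1n; lia.
Qed.

Lemma C3 K : 4 * K < g ->
  \sum_(j < K) ell (2 * j + 2) + (c \in Gam_o adj S) <= #|Gam_o adj S|.
Proof.
move=> HK.
have HH := sum_P Gop (uniq_lev 0 K.+1) (pw_lev (a := 0) (k := K.+1) ltac:(lia)).
rewrite card_Gop -map_comp sumn_iota big_ord_recl in HH.
apply: leq_trans HH; rewrite addnC leq_add //.
  have -> : (2 * @nat_of_ord K.+1 ord0 + 0 = 0)%N by []. by rewrite /= Hrc addn0.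
apply: leq_sum => i _; rewrite /ell.
have -> : 2 * lift ord0 i + 0 = 2 * i + 2 by rewrite lift0; lia.
by apply: sub_count => w; apply: leaf_Gop.
Qed.

Lemma C4 k : 4 * k < g + 2 -> \sum_(j < k) N (2 * j + 1) <= #|S|.
Proof.
move=> Hk; rewrite -(sumn_iota (fun j => N (2 * j + 1))).
have := sum_S (uniq_lev 1 k) (pw_lev (a := 1) (k := k) _).
rewrite -map_comp; apply; first lia.
move=> n w /mapP [j _ ->] Hw; apply: LS_lev HrV Hw _.
by rewrite Hrc /= oddD oddM.
Qed.

Lemma C5 k : 4 * k < g -> N (2 * k + 1) + dl * \sum_(j < k) N (2 * j + 1) <= dl * #|S|.
Proof.
move=> Hk; rewrite -(sumn_iota (fun j => N (2 * j + 1))).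
have := sum_S_last (l := 2 * k + 1) Hreg (uniq_lev 1 k) (pw_lev (a := 1) (k := k) _).
rewrite -map_comp; apply; first lia.
- by apply/mapP => -[j]; rewrite mem_iota; lia.
- by move=> m /mapP [j]; rewrite mem_iota; lia.
- lia.
- lia.
- move=> n w /mapP [j _ ->] Hw; apply: LS_lev HrV Hw _.
  by rewrite Hrc /= oddD oddM.
- move=> w Hw; apply: LS_lev HrV Hw _.
  by rewrite Hrc /= oddD oddM.
Qed.
End CheckRoot.


Section VarRoot.
Variables (dl : nat) (v : L).
Hypotheses (Hreg : left_regular adj dl) (Hrv : r = inl v) (Hv : v \in S)
  (Hnl : forall c, adj v c -> degS adj S c != 1).

Lemma HrV' : r \in VS adj S. Proof. by rewrite Hrv /VS inE. Qed.

Lemma sum_lev0 (F : nat -> nat) k :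
  \sum_(j < k.+1) F (2 * j + 0) = F 0 + \sum_(j < k) F (2 * j + 2).
Proof.
rewrite big_ord_recl; congr (_ + _); apply: eq_bigr => i _.
by rewrite lift0; congr F; lia.
Qed.

Lemma E1 : dl <= N 2.
Proof.
have H1 : dl <= N 1 by rewrite -(card_nbrsL Hreg Hv) -Hrv N1.
have H2 := N_chk (n := 1) HrV'; rewrite Hrv /= in H2.
have H3 : ell 1 = 0.
  apply/eqP; rewrite -leqn0 leqNgt -has_count; apply/hasPn => w /W_S [u [y [Hu Hy ->]]].
  move: Hu Hy; rewrite mem_seq1 => /eqP -> /and3P[Ht _ _].
  by move: Ht; rewrite /= Hrv; case: y => //= c Hc; apply: Hnl.
have := H2 isT; rewrite H3; lia.
Qed.

Lemma E2 j : (dl - 1) * N (2 * j + 2) <= N (2 * j.+1 + 2) + ell (2 * j + 3).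
Proof.
have H1 := N_var (n := 2 * j + 2) Hreg HrV'.
have H2 := N_chk (n := (2 * j + 2).+1) HrV'.
rewrite Hrv /= oddD oddM /= in H1 H2.
have := H1 isT; have := H2 isT.
have -> : 2 * j.+1 + 2 = (2 * j + 2).+2 by lia.
have -> : 2 * j + 3 = (2 * j + 2).+1 by lia.
rewrite mulnBl mul1n; lia.
Qed.

Lemma E3 K : 4 * K + 2 < g -> \sum_(j < K) ell (2 * j + 3) <= #|Gam_o adj S|.
Proof.
move=> HK.
have HH := sum_P Gop (uniq_lev 1 K.+1) (pw_lev (a := 1) (k := K.+1) ltac:(lia)).
rewrite card_Gop -map_comp sumn_iota big_ord_recl in HH.
apply: leq_trans HH; apply: leq_trans (leq_addl _ _).
apply: leq_sum => i _; rewrite /ell.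
have -> : 2 * lift ord0 i + 1 = 2 * i + 3 by rewrite lift0; lia.
by apply: sub_count => w; apply: leaf_Gop.
Qed.

Lemma E4 k : 4 * k < g -> 1 + \sum_(j < k) N (2 * j + 2) <= #|S|.
Proof.
move=> Hk; rewrite -N0 -(sum_lev0 N) -(sumn_iota (fun j => N (2 * j + 0))).
have := sum_S (uniq_lev 0 k.+1) (pw_lev (a := 0) (k := k.+1) _).
rewrite -map_comp; apply; first lia.
move=> n w /mapP [j _ ->] Hw; apply: LS_lev HrV' Hw _.
by rewrite Hrv /= oddD oddM.
Qed.

Lemma E5 k : 4 * k + 2 < g ->
  N (2 * k + 2) + dl * (1 + \sum_(j < k) N (2 * j + 2)) <= dl * #|S|.
Proof.
move=> Hk; rewrite -N0 -(sum_lev0 N) -(sumn_iota (fun j => N (2 * j + 0))).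
have := sum_S_last (l := 2 * k + 2) Hreg (uniq_lev 0 k.+1) (pw_lev (a := 0) (k := k.+1) _).
rewrite -map_comp; apply; first lia.
- by apply/mapP => -[j]; rewrite mem_iota; lia.
- by move=> m /mapP [j]; rewrite mem_iota; lia.
- lia.
- lia.
- move=> n w /mapP [j _ ->] Hw; apply: LS_lev HrV' Hw _.
  by rewrite Hrv /= oddD oddM.
- move=> w Hw; apply: LS_lev HrV' Hw _.
  by rewrite Hrv /= oddD oddM.
Qed.
End VarRoot.

End Walks.

Local Open Scope ring_scope.
Lemma growth0 (Z m : nat -> nat) (q : rat) : 1 <= q ->
  (forall j, q * (Z j)%:R <= (Z j.+1)%:R + (m j)%:R) ->
  forall j, q ^+ j * (q * (Z 0)%:R - \sum_(i < j.+1) (m i)%:R) <= (Z j.+1)%:R.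
Proof.
move=> Hq Hg; elim=> [|j IH].
  by rewrite expr0 mul1r big_ord1; have := Hg 0%N; lra.
rewrite big_ord_recr /= exprS.
set X := q * (Z 0)%:R - \sum_(i < j.+1) (m i)%:R.
have Hqj : 1 <= q ^+ j.+1 by rewrite exprn_ege1.
have H1 : q * (q ^+ j * X) <= q * (Z j.+1)%:R by rewrite ler_wpM2l //; lra.
have H2 := Hg j.+1.
have Hm : 0 <= (m j.+1)%:R :> rat by [].
have H3 : (m j.+1)%:R <= q ^+ j.+1 * (m j.+1)%:R :> rat by rewrite ler_peMl.
rewrite exprS in H3.
have -> : q * q ^+ j * (q * (Z 0)%:R - (\sum_(i < j.+1) (m i)%:R + (m j.+1)%:R)) = q * (q ^+ j * X) - q * q ^+ j * (m j.+1)%:R by rewrite /X; ring.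
lra.
Qed.

Lemma growth (Z m : nat -> nat) (q z0 B : rat) K : 1 <= q ->
  (forall j, q * (Z j)%:R <= (Z j.+1)%:R + (m j)%:R) ->
  z0 <= (Z 0)%:R -> \sum_(i < K) (m i)%:R <= B ->
  forall j, (j < K)%N -> q ^+ j * (q * z0 - B) <= (Z j.+1)%:R.
Proof.
move=> Hq Hg Hz HB j Hj; apply: le_trans (growth0 Hq Hg j).
have Hqj : 0 <= q ^+ j by rewrite exprn_ge0 //; lra.
rewrite ler_wpM2l // lerB // ?ler_wpM2l //; try lra.
apply: le_trans HB.
rewrite -(subnKC Hj) big_split_ord /= lerDl.
by apply: sumr_ge0.
Qed.

Lemma growth_sum (Z m : nat -> nat) (q z0 B : rat) K J : 1 <= q ->
  (forall j, q * (Z j)%:R <= (Z j.+1)%:R + (m j)%:R) ->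
  z0 <= (Z 0)%:R -> \sum_(i < K) (m i)%:R <= B -> (J <= K)%N ->
  (q * z0 - B) * \sum_(j < J) q ^+ j <= \sum_(j < J) (Z j.+1)%:R.
Proof.
move=> Hq Hg Hz HB HJ; rewrite mulr_sumr; apply: ler_sum => j _.
rewrite mulrC; apply: (growth Hq Hg Hz HB); have := ltn_ord j; lia.
Qed.
Lemma qcast (dl : nat) : (1 <= dl)%N -> ((dl - 1)%N%:R : rat) = dl%:R - 1.
Proof. by move=> H; rewrite natrB. Qed.

Lemma CR (L R : finType) (adj : L -> R -> bool) (S : {set L}) (g dl a b : nat) (c : R) :
  (forall p, is_cycle adj p -> (g <= size p)%N) -> left_regular adj dl -> (3 <= dl)%N ->
  c \in Gam adj S -> #|S| = a -> #|Gam_o adj S| = b ->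
  let d := degS adj S c in let q := (dl%:R - 1 : rat) in
  let B := (b%:R - (c \in Gam_o adj S)%:R : rat) in
  (forall k, (0 < k)%N -> (4 * k <= g)%N ->
     d%:R + (d%:R * q - B) * \sum_(i < k - 1) q ^+ i <= a%:R) /\
  (forall k, (0 < k)%N -> (4 * k + 2 <= g)%N ->
     d%:R + (d%:R * q - B) * \sum_(i < k - 1) q ^+ i + (d%:R * q - B) * q ^+ (k - 1) / dl%:R
       <= a%:R).
Proof.
move=> Hg Hreg Hdl Hc Ha Hb d q B.
set r : (L + R)%type := inr c.
have Hrc : r = inr c by [].
set Z := fun j => N adj S r (2 * j + 1).
set m := fun j => ell adj S r (2 * j + 2).
have Hq : 1 <= q by rewrite /q lerBrDr (_ : 1 + 1 = 2%:R) // ler_nat; lia.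
have Hgr : forall j, q * (Z j)%:R <= (Z j.+1)%:R + (m j)%:R.
  move=> j; rewrite /q -qcast; last lia.
  by rewrite -natrM -natrD ler_nat; apply: (C2 Hreg Hrc Hc).
have Hz : d%:R <= (Z 0%N)%:R :> rat by rewrite ler_nat; exact: (@C1 L R adj S r c Hrc).
have HB : forall K, (4 * K < g)%N -> \sum_(i < K) (m i)%:R <= B.
  move=> K HK; rewrite /B -natr_sum lerBrDr -natrD ler_nat -Hb.
  exact: (C3 Hg Hrc Hc HK).
have Hdq : d%:R * q - B = q * d%:R - B by rewrite mulrC.
split.
- move=> [|k] // _ Hk; rewrite subSS subn0.
  apply: (@le_trans _ _ (\sum_(j < k.+1) (Z j)%:R)); last first.
    by rewrite -natr_sum -Ha ler_nat; apply: (C4 Hg Hrc Hc); lia.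
  rewrite big_ord_recl lerD // Hdq.
  apply: (growth_sum Hq Hgr Hz (HB k _)); lia.
- move=> [|k] // _ Hk; rewrite subSS subn0.
  have H5 := C5 Hg Hreg Hrc Hc (k := k.+1) ltac:(lia).
  have Hdl0 : 0 < dl%:R :> rat by rewrite ltr0n; lia.
  have HZk : q ^+ k * (q * d%:R - B) <= (Z k.+1)%:R.
    apply: (growth Hq Hgr Hz (HB k.+1 _)); lia.
  have HS : d%:R + (d%:R * q - B) * \sum_(i < k) q ^+ i <= \sum_(j < k.+1) (Z j)%:R.
    rewrite big_ord_recl lerD // Hdq.
    apply: (growth_sum Hq Hgr Hz (HB k.+1 _)); lia.
  have H5' : (Z k.+1)%:R + dl%:R * \sum_(j < k.+1) (Z j)%:R <= dl%:R * a%:R :> rat.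
    by rewrite -natr_sum -!natrM -natrD ler_nat -Ha.
  have HZ : (d%:R * q - B) * q ^+ k / dl%:R <= (Z k.+1)%:R / dl%:R.
    by rewrite ler_wpM2r ?invr_ge0 ?ler0n // Hdq mulrC.
  have HZ2 : (Z k.+1)%:R / dl%:R <= a%:R - \sum_(j < k.+1) (Z j)%:R :> rat.
    rewrite ler_pdivrMr //; nra.
  lra.
Qed.

Lemma VR (L R : finType) (adj : L -> R -> bool) (S : {set L}) (g dl a b : nat) (v : L) :
  (forall p, is_cycle adj p -> (g <= size p)%N) -> left_regular adj dl -> (3 <= dl)%N ->
  v \in S -> (forall c, adj v c -> degS adj S c != 1%N) ->
  #|S| = a -> #|Gam_o adj S| = b ->
  let q := (dl%:R - 1 : rat) in
  (forall k, (1 < k)%N -> (4 * k <= g)%N ->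
     1 + dl%:R + (dl%:R * q - b%:R) * \sum_(i < k - 2) q ^+ i
       + (dl%:R * q - b%:R) * q ^+ (k - 2) / dl%:R <= a%:R) /\
  (forall k, (0 < k)%N -> (4 * k + 2 <= g)%N ->
     1 + dl%:R + (dl%:R * q - b%:R) * \sum_(i < k - 1) q ^+ i <= a%:R).
Proof.
move=> Hg Hreg Hdl Hv Hnl Ha Hb q.
set r : (L + R)%type := inl v.
have Hrv : r = inl v by [].
set Z := fun j => N adj S r (2 * j + 2).
set m := fun j => ell adj S r (2 * j + 3).
have Hq : 1 <= q by rewrite /q lerBrDr (_ : 1 + 1 = 2%:R) // ler_nat; lia.
have Hgr : forall j, q * (Z j)%:R <= (Z j.+1)%:R + (m j)%:R.
  move=> j; rewrite /q -qcast; last lia.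
  by rewrite -natrM -natrD ler_nat; apply: (E2 Hreg Hrv Hv).
have Hz : dl%:R <= (Z 0%N)%:R :> rat by rewrite ler_nat; exact: (E1 Hreg Hrv Hv Hnl).
have HB : forall K, (4 * K + 2 < g)%N -> \sum_(i < K) (m i)%:R <= b%:R :> rat.
  move=> K HK; rewrite -natr_sum ler_nat -Hb.
  exact: (E3 r Hg Hv HK).
have Hdq : dl%:R * q - b%:R = q * dl%:R - b%:R by rewrite mulrC.
split.
- move=> [|[|k]] // _ Hk; rewrite subSS subSS subn0.
  have H5 := E5 Hg Hreg Hrv Hv (k := k.+1) ltac:(lia).
  have Hdl0 : 0 < dl%:R :> rat by rewrite ltr0n; lia.
  have HZk : q ^+ k * (q * dl%:R - b%:R) <= (Z k.+1)%:R.
    apply: (growth Hq Hgr Hz (HB k.+1 _)); lia.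
  have HS : dl%:R + (dl%:R * q - b%:R) * \sum_(i < k) q ^+ i <= \sum_(j < k.+1) (Z j)%:R.
    rewrite big_ord_recl lerD // Hdq.
    apply: (growth_sum Hq Hgr Hz (HB k.+1 _)); lia.
  have H5' : (Z k.+1)%:R + dl%:R * (1 + \sum_(j < k.+1) (Z j)%:R) <= dl%:R * a%:R :> rat.
    by rewrite -natr_sum -(natrD _ 1) -!natrM -natrD ler_nat -Ha.
  have HZ : (dl%:R * q - b%:R) * q ^+ k / dl%:R <= (Z k.+1)%:R / dl%:R :> rat.
    by rewrite ler_wpM2r ?invr_ge0 ?ler0n // Hdq mulrC.
  have HZ2 : (Z k.+1)%:R / dl%:R <= a%:R - 1 - \sum_(j < k.+1) (Z j)%:R :> rat.
    rewrite ler_pdivrMr //; nra.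
  lra.
- move=> [|k] // _ Hk; rewrite subSS subn0.
  apply: (@le_trans _ _ (1 + \sum_(j < k.+1) (Z j)%:R)); last first.
    by rewrite -natr_sum -(natrD _ 1) -Ha ler_nat; apply: (E4 Hg Hrv Hv); lia.
  rewrite -addrA lerD // big_ord_recl lerD // Hdq.
  apply: (growth_sum Hq Hgr Hz (HB k _)); lia.
Qed.

Lemma exists_v (L R : finType) (adj : L -> R -> bool) (S : {set L}) :
  (#|Gam_o adj S| < #|S|)%N ->
  exists2 v, v \in S & forall c, adj v c -> degS adj S c != 1%N.
Proof.
case: (boolP [exists v in S, [forall c, adj v c ==> (degS adj S c != 1%N)]]).
  case/existsP => v /andP[Hv /forallP H] _; exists v => // c Hc.
  exact: (implyP (H c) Hc).
rewrite negb_exists => /forallP Hn Hlt; exfalso.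
set f := fun c : R => [pick u in S | adj u c].
have Hsub : Some @: S \subset f @: [set c | degS adj S c == 1%N].
  apply/subsetP => _ /imsetP [v Hv ->].
  move: (Hn v); rewrite Hv /= negb_forall => /existsP [c].
  rewrite negb_imply negbK => /andP[Hvc Hd1].
  apply/imsetP; exists c; first by rewrite inE.
  rewrite /f; case: pickP => [u /andP[Hu Huc]|H0]; last first.
    by move: (H0 v); rewrite Hv Hvc.
  move: Hd1; rewrite /degS => /cards1P [x Hx].
  have : v \in [set v in S | adj v c] by rewrite inE Hv Hvc.
  have : u \in [set v in S | adj v c] by rewrite inE Hu Huc.
  by rewrite Hx !inE => /eqP -> /eqP ->.
have := subset_leq_card Hsub.
rewrite card_imset; last by move=> x y [].
move=> H1; have H2 := leq_trans H1 (leq_imset_card _ _).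
have H3 : (#|[set c | degS adj S c == 1%N]| <= #|Gam_o adj S|)%N.
  apply: subset_leq_card; apply/subsetP => c; rewrite !inE => /eqP H1c.
  rewrite H1c andbT.
  have : (0 < degS adj S c)%N by rewrite H1c.
  by case/card_gt0P => u; rewrite inE => /andP[Hu Huc]; apply/existsP; exists u; rewrite Hu.
have := leq_trans H2 H3; lia.
Qed.

Unset Implicit Arguments.
Theorem lemma7 (L R : finType) (adj : L -> R -> bool) (dl g : nat)
  (S : {set L}) (a b : nat) :
  left_regular adj dl -> (3 <= dl)%N -> girth adj g -> (4 < g)%N ->
  trapping_set adj S a b -> (b < a)%N -> induced_connected adj S ->
  let caseE := elementary adj S /\ (b < dl * (dl - 1))%N in
  let caseO := fun d_o : nat =>
    (exists c, c \in Gam_o adj S /\ degS adj S c = d_o) /\ (1 < d_o)%N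
    /\ (b < d_o * (dl - 1))%N in
  let caseEv := fun d_e : nat =>
    (exists c, c \in Gam_e adj S /\ degS adj S c = d_e) /\ (2 < d_e)%N
    /\ (b < d_e * (dl - 1))%N in
  let q := (dl%:R - 1 : rat) in
  (* (a) g = 4k, k > 1 *)
  (forall k : nat, (1 < k)%N -> g = (4 * k)%N ->
     (caseE ->
        a%:R >= 1 + dl%:R
                + (dl%:R * q - b%:R) * (\sum_(i < k - 2) q ^+ i)
                + (dl%:R * q - b%:R) * q ^+ (k - 2) / dl%:R)
  /\ (forall d_o, caseO d_o ->
        a%:R >= d_o%:R + (d_o%:R * q - b%:R + 1) * (\sum_(i < k - 1) q ^+ i))
  /\ (forall d_e, caseEv d_e ->
        a%:R >= d_e%:R + (d_e%:R * q - b%:R) * (\sum_(i < k - 1) q ^+ i)))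
  /\
  (* (b) g = 4k+2, k > 0 *)
  (forall k : nat, (0 < k)%N -> g = (4 * k + 2)%N ->
     (caseE ->
        a%:R >= 1 + dl%:R + (dl%:R * q - b%:R) * (\sum_(i < k - 1) q ^+ i))
  /\ (forall d_o, caseO d_o ->
        a%:R >= d_o%:R + (d_o%:R * q - b%:R + 1) * (\sum_(i < k - 1) q ^+ i)
                + (d_o%:R * q - b%:R + 1) * q ^+ (k - 1) / dl%:R)
  /\ (forall d_e, caseEv d_e ->
        a%:R >= d_e%:R + (d_e%:R * q - b%:R) * (\sum_(i < k - 1) q ^+ i)
                + (d_e%:R * q - b%:R) * q ^+ (k - 1) / dl%:R)).
Proof.
move=> Hreg Hdl Hgir Hg4 [Ha Hb] Hba _ caseE caseO caseEv q.
have Hg := proj2 Hgir.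
have [v Hv Hnl] : exists2 v, v \in S & forall c, adj v c -> degS adj S c != 1%N.
  by apply: exists_v; rewrite Ha Hb.
have [VRa VRb] := VR Hg Hreg Hdl Hv Hnl Ha Hb.
have HO : forall c, c \in Gam_o adj S ->
    c \in Gam adj S /\ (c \in Gam_o adj S)%:R = 1 :> rat.
  by move=> c Hc; split; [move: Hc; rewrite inE => /andP[] | rewrite Hc].
have HE : forall c, c \in Gam_e adj S ->
    c \in Gam adj S /\ (c \in Gam_o adj S)%:R = 0 :> rat.
  move=> c; rewrite !inE => /andP[-> Hod]; split => //.
  by rewrite (negbTE Hod).
split.
- move=> k Hk Hgk; split; [|split].
  + by move=> _; apply: VRa; lia.
  + move=> d [[c [Hc Hd]] _].
    have [Hc' Hc1] := HO c Hc.
    have [H1 _] := CR Hg Hreg Hdl Hc' Ha Hb.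
    have := H1 k ltac:(lia) ltac:(lia); rewrite Hc1 Hd.
    by have -> : d%:R * q - (b%:R - 1) = d%:R * q - b%:R + 1 by ring.
  + move=> d [[c [Hc Hd]] _].
    have [Hc' Hc1] := HE c Hc.
    have [H1 _] := CR Hg Hreg Hdl Hc' Ha Hb.
    have := H1 k ltac:(lia) ltac:(lia); rewrite Hc1 Hd.
    by rewrite subr0.
- move=> k Hk Hgk; split; [|split].
  + by move=> _; apply: VRb; lia.
  + move=> d [[c [Hc Hd]] _].
    have [Hc' Hc1] := HO c Hc.
    have [_ H2] := CR Hg Hreg Hdl Hc' Ha Hb.
    have := H2 k ltac:(lia) ltac:(lia); rewrite Hc1 Hd.
    by have -> : d%:R * q - (b%:R - 1) = d%:R * q - b%:R + 1 by ring.
  + move=> d [[c [Hc Hd]] _].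
    have [Hc' Hc1] := HE c Hc.
    have [_ H2] := CR Hg Hreg Hdl Hc' Ha Hb.
    have := H2 k ltac:(lia) ltac:(lia); rewrite Hc1 Hd.
    by rewrite subr0.
Qed.
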